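(* Let $X_\Sigma$ be a projective toric variety and $D$ an $\mathbf R$-ample divisor on $X_\Sigma$. For each $\lambda\in\Lambda^D$, the stratum $S^{\chi_D}_\lambda$ is smooth, irreducible, and open in its Zariski closure $\overline{S^{\chi_D}_\lambda}$. More precisely, $S^{\chi_D}_\lambda=V(x_\rho:\rho\in S)\setminus\bigcup_RV(x_\rho:\rho\in R)$, where $S$ is a subset of $\Sigma(1)$ containing some primitive collection and $R$ runs through some collection of subsets of $\Sigma(1)\setminus S$.
   Context: $\Sigma$ complete fan with rays $\Sigma(1)$, generators $u_\rho$, divisors $D_\rho$; a primitive collection is $C\subset\Sigma(1)$ not contained in $\sigma(1)$ for any cone $\sigma$ while every proper subset is; $\mathbf C^{\Sigma(1)}=\mathrm{Spec}\,\mathbf C[x_\rho]$, $Z(\Sigma)=\bigcup_C V(x_\rho:\rho\in C)$. $\Gamma(G)=\{b\in\mathbf Z^{\Sigma(1)}:\sum b_\rho u_\rho=0\}$ (one-parameter subgroups of $G=\mathrm{Hom}(\mathrm{Cl}(X_\Sigma),\mathbf C^\times)$), $\langle\chi_D,b\rangle=\sum a_\rho b_\rho$ for $D=\sum a_\rho D_\rho$ extended $\mathbf R$-linearly, $\Gamma(G)_{\mathbf R}\subset\mathbf R^{\Sigma(1)}$ with restricted standard norm. $\mathbf R$-ample divisors are elements of the ample cone in $\mathrm{Pic}(X_\Sigma)_{\mathbf R}$. For $x\in Z(\Sigma)$ let $\sigma_x=\{v\in\Gamma(G)_{\mathbf R}:v_\rho\ge0\text{ whenever }x_\rho\ne0\}$;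 $v\mapsto\langle\chi_D,v\rangle/\|v\|$ attains its minimum $M^D(x)<0$ on $\sigma_x\setminus\{0\}$ exactly on one ray, and $\lambda^D_x$ denotes the vector on that ray with $\|\lambda^D_x\|=-M^D(x)$. $\Lambda^D=\{\lambda^D_x:x\in Z(\Sigma)\}$, $S^{\chi_D}_\lambda=\{x\in Z(\Sigma):\lambda^D_x=\lambda\}$. *)

(* Defs.v *)
From HB Require Import structures.
From mathcomp Require Import all_boot all_order all_algebra complex.
From mathcomp Require Import reals.
Set Implicit Arguments. Unset Strict Implicit. Unset Printing Implicit Defensive.
Import Order.TTheory GRing.Theory Num.Theory.
Local Open Scope ring_scope.

Section Toric.
Variables (R : realType) (n r : nat).
(* u rho = the primitive ray generator u_rho in N = Z^n, rho in Sigma(1) = 'I_r *)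
Variable u : 'I_r -> 'I_n -> int.
(* the cones of the fan, each cone sigma recorded by its ray set sigma(1) *)
Variable cones : {set {set 'I_r}}.

Definition pair_mu (m : 'I_n -> R) (rho : 'I_r) : R :=
  \sum_(i < n) m i * (u rho i)%:~R.

Definition in_cone (S : {set 'I_r}) (v : 'I_n -> R) : Prop :=
  exists c : 'I_r -> R,
    [/\ forall rho, 0 <= c rho, forall rho, rho \notin S -> c rho = 0
      & forall i, v i = \sum_(rho < r) c rho * (u rho i)%:~R].

Definition is_face (T S : {set 'I_r}) : Prop :=
  exists m : 'I_n -> R, (forall rho, rho \in S -> 0 <= pair_mu m rho) /\
    T = [set rho in S | pair_mu m rho == 0].

Definition primitive_vector (w : 'I_n -> int) : Prop :=
  forall (k : nat) (v : 'I_n -> int), (forall i, w i = k%:Z * v i) -> k = 1%N.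

Definition complete_fan : Prop :=
  [/\ (forall rho, primitive_vector (u rho)),
      (forall rho, [set rho] \in cones),
      (forall s, s \in cones -> exists m : 'I_n -> R,
          forall rho, rho \in s -> 0 < pair_mu m rho),
      (forall s T, s \in cones -> is_face T s -> T \in cones)
    &
      (forall s t, s \in cones -> t \in cones ->
        [/\ (forall v, (in_cone s v /\ in_cone t v) <-> in_cone (s :&: t) v),
            is_face (s :&: t) s & is_face (s :&: t) t])] /\
  (forall v : 'I_n -> R, exists2 s, s \in cones & in_cone s v).

Definition maximal_cone (s : {set 'I_r}) : Prop :=
  s \in cones /\ forall t, t \in cones -> s \subset t -> t = s.

(* D = sum a_rho D_rho (real coefficients) is R-ample: its class lies in the
   ample cone of Pic(X_Sigma)_R, i.e. D is R-Cartier with a strictly convex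
   support function (Cartier data m_sigma in M_R for the maximal cones). *)
Definition R_ample (a : 'I_r -> R) : Prop :=
  forall s, maximal_cone s -> exists m : 'I_n -> R,
    (forall rho, rho \in s -> pair_mu m rho = - a rho) /\
    (forall rho, rho \notin s -> - a rho < pair_mu m rho).

(* X_Sigma is projective: it carries an ample (integral, Cartier) divisor. *)
Definition projective_fan : Prop :=
  exists a : 'I_r -> int, forall s, maximal_cone s -> exists m : 'I_n -> int,
    (forall rho, rho \in s -> \sum_(i < n) m i * u rho i = - a rho) /\
    (forall rho, rho \notin s -> - a rho < \sum_(i < n) m i * u rho i).

Definition primitive_collection (C : {set 'I_r}) : Prop :=
  (forall s, s \in cones -> ~~ (C \subset s)) /\
  (forall C' : {set 'I_r}, C' \proper C -> exists2 s, s \in cones & C' \subset s).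

Definition in_V (S : {set 'I_r}) (x : 'I_r -> R[i]) : Prop :=
  forall rho, rho \in S -> x rho = 0.

Definition in_Z (x : 'I_r -> R[i]) : Prop :=
  exists C, primitive_collection C /\ in_V C x.

Definition in_GammaR (v : 'I_r -> R) : Prop :=
  forall i : 'I_n, \sum_(rho < r) v rho * (u rho i)%:~R = 0.

Definition chi_pair (a : 'I_r -> R) (v : 'I_r -> R) : R :=
  \sum_(rho < r) a rho * v rho.

Definition eucl_norm (v : 'I_r -> R) : R := Num.sqrt (\sum_(rho < r) v rho ^+ 2).

Definition in_sigma_x (x : 'I_r -> R[i]) (v : 'I_r -> R) : Prop :=
  in_GammaR v /\ forall rho, x rho != 0 -> 0 <= v rho.

(* lam = lambda^D_x : lam lies in sigma_x \ {0}, minimizes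
   v |-> <chi_D, v>/||v|| on sigma_x \ {0}, and ||lam|| = - M^D(x). *)
Definition is_lambda (a : 'I_r -> R) (x : 'I_r -> R[i]) (lam : 'I_r -> R) : Prop :=
  [/\ in_sigma_x x lam, lam <> (fun _ => 0),
      (forall v, in_sigma_x x v -> v <> (fun _ => 0) ->
         chi_pair a lam / eucl_norm lam <= chi_pair a v / eucl_norm v)
    & eucl_norm lam = - (chi_pair a lam / eucl_norm lam)].

Definition in_Lambda (a : 'I_r -> R) (lam : 'I_r -> R) : Prop :=
  exists x, in_Z x /\ is_lambda a x lam.

Definition in_stratum (a : 'I_r -> R) (lam : 'I_r -> R) (x : 'I_r -> R[i]) : Prop :=
  in_Z x /\ is_lambda a x lam.

End Toric.

(* Main.v *)
Require Import Defs.
From HB Require Import structures.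
From mathcomp Require Import all_boot all_order all_algebra complex.
From mathcomp Require Import reals.
From Stdlib Require Import Classical ClassicalEpsilon FunctionalExtensionality.
Import Order.TTheory GRing.Theory Num.Theory.
Local Open Scope ring_scope.

Definition pb (P : Prop) : bool :=
  if excluded_middle_informative P then true else false.

Lemma pbP (P : Prop) : pb P <-> P.
Proof. by rewrite /pb; case: excluded_middle_informative. Qed.

Lemma mono_stratum (R : realType) (n r : nat) (u : 'I_r -> 'I_n -> int)
    (cones : {set {set 'I_r}}) (a lam : 'I_r -> R) (C : {set 'I_r})
    (x y : 'I_r -> R[i]) :
  primitive_collection cones C ->
  (forall rho, rho \in C -> y rho = 0) ->
  (forall rho, y rho != 0 -> 0 <= lam rho) ->
  (forall rho, x rho != 0 -> y rho != 0) ->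
  in_stratum u cones a lam x -> in_stratum u cones a lam y.
Proof.
move=> pC yC ylam xy [_ [[G _] nz mn nm]]; split.
  by exists C; split.
split; [by split | by [] | | by []].
move=> v Hv vnz; apply: mn => //; case: Hv => Gv pv; split => // rho /xy; exact: pv.
Qed.

Theorem theorem5p31 (R : realType) (n r : nat) (u : 'I_r -> 'I_n -> int)
    (cones : {set {set 'I_r}}) (a : 'I_r -> R) (lam : 'I_r -> R) :
  complete_fan R u cones ->
  projective_fan u cones ->
  R_ample u cones a ->
  in_Lambda u cones a lam ->
  exists S : {set 'I_r},
    (exists C, primitive_collection cones C /\ C \subset S) /\
    exists Rs : {set {set 'I_r}},
      (forall T, T \in Rs -> T \subset ~: S) /\
      forall x : 'I_r -> R[i],
        in_stratum u cones a lam x <->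
        (in_V S x /\ ~ (exists2 T, T \in Rs & in_V T x)).
Proof.
move=> _ _ amp [x0 [Zx0 [[G0 pos0] nz0 mn0 nm0]]].
set S := [set rho | lam rho < 0].
have Sge : forall rho, rho \notin S -> 0 <= lam rho.
  by move=> rho; rewrite inE -leNgt.
have notcone : forall s0, s0 \in cones -> ~~ (S \subset s0).
  move=> s0 s0c; apply/negP => Ss0.
  pose P := [pred t : {set 'I_r} | (t \in cones) && (s0 \subset t)].
  have P0 : P s0 by rewrite /P /= s0c subxx.
  case: (arg_maxnP (fun t : {set 'I_r} => #|t|) P0) => s /andP[sc s0s] smax.
  have [m [mE mL]] : exists m : 'I_n -> R,
      (forall rho, rho \in s -> pair_mu u m rho = - a rho) /\
      (forall rho, rho \notin s -> - a rho < pair_mu u m rho).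
    apply: amp; split => // t tc st.
    apply/eqP; rewrite eq_sym eqEcard st /=.
    by apply: smax; rewrite /P /= tc (subset_trans s0s st).
  have Hpm : \sum_(rho < r) lam rho * pair_mu u m rho = 0.
    rewrite /pair_mu.
    under eq_bigr do rewrite big_distrr.
    rewrite exchange_big /= big1 // => i _.
    under eq_bigr do rewrite mulrCA.
    by rewrite -big_distrr /= G0 mulr0.
  have chi0 : 0 <= chi_pair a lam.
    have -> : chi_pair a lam =
        \sum_(rho < r) (a rho + pair_mu u m rho) * lam rho.
      rewrite /chi_pair.
      under [RHS]eq_bigr do rewrite mulrDl.
      rewrite big_split /=.
      under [X in _ = _ + X]eq_bigr do rewrite mulrC.
      by rewrite Hpm addr0.
    apply: sumr_ge0 => rho _.
    case: (boolP (rho \in s)) => rs.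
      by rewrite mE // subrr mul0r.
    apply: mulr_ge0; first by rewrite -lerBlDl sub0r ltW // mL.
    apply: Sge; apply/negP => rS; move/negP: rs; apply.
    exact: (subsetP (subset_trans Ss0 s0s)).
  have N0 : 0 <= eucl_norm lam by exact: sqrtr_ge0.
  have Nle : eucl_norm lam <= 0.
    by rewrite nm0 oppr_le0 divr_ge0.
  have N00 : eucl_norm lam = 0 by apply/eqP; rewrite eq_le Nle N0.
  apply: nz0; apply: functional_extensionality => rho.
  move: N00; rewrite /eucl_norm => /eqP; rewrite sqrtr_eq0 => H.
  have H2 : \sum_(rho < r) lam rho ^+ 2 = 0.
    by apply/eqP; rewrite eq_le H sumr_ge0 // => k _; rewrite sqr_ge0.
  move/eqP: H2; rewrite psumr_eq0; last by move=> k _; rewrite sqr_ge0.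
  move/allP => /(_ rho (mem_index_enum _)) /=.
  by rewrite sqrf_eq0 => /eqP.
have [C pC CS] : exists2 C, primitive_collection cones C & C \subset S.
  pose P := [pred C : {set 'I_r} | (C \subset S) &&
               [forall s in cones, ~~ (C \subset s)]].
  have PS : P S.
    rewrite /P /= subxx /=; apply/forall_inP => s sc; exact: notcone.
  case: (arg_minnP (fun t : {set 'I_r} => #|t|) PS) => C /andP[CS Cnc] Cmin.
  exists C => //; split.
    by move=> s sc; move/forall_inP: Cnc; apply.
  move=> C' C'C.
  have : ~~ [forall s in cones, ~~ (C' \subset s)].
    apply/negP => H.
    have := Cmin C'; rewrite /P /= H (subset_trans (proper_sub C'C) CS).
    move=> /(_ isT); rewrite leqNgt proper_card //.
  rewrite negb_forall => /existsP [s]; rewrite negb_imply negbK => /andP[sc C's].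
  by exists s.
pose xJ (J : {set 'I_r}) : 'I_r -> R[i] := fun rho => if rho \in J then 0 else 1.
exists S; split; first by exists C.
exists [set T | [exists J : {set 'I_r}, [&& S \subset J, T == J :\: S &
                  ~~ pb (in_stratum u cones a lam (xJ J))]]].
split.
  move=> T; rewrite inE => /existsP [J] /and3P[_ /eqP -> _].
  by apply/subsetP => rho; rewrite !inE => /andP[].
move=> x; split.
  move=> st; have [_ [[_ px] _ _ _]] := st.
  split.
    move=> rho rS; apply/eqP; apply/negP => /negP xr.
    by have := px _ xr; rewrite leNgt; move: rS; rewrite inE => ->.
  case=> T; rewrite inE => /existsP [J] /and3P[SJ /eqP -> npb] VT.
  move/negP: npb; apply; apply/pbP.
  apply: (@mono_stratum R n r u cones a lam C x (xJ J) pC) => //.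
  - by move=> rho rC; rewrite /xJ (subsetP SJ) // (subsetP CS).
  - move=> rho; rewrite /xJ; case: (boolP (rho \in J)) => rJ; first by rewrite eqxx.
    move=> _; apply: Sge; apply: contra rJ; exact: (subsetP SJ).
  - move=> rho xr; rewrite /xJ; case: (boolP (rho \in J)) => rJ; last by rewrite oner_eq0.
    exfalso; case: (boolP (rho \in S)) => rS.
      by have := px _ xr; rewrite leNgt; move: rS; rewrite inE => ->.
    by move: xr; rewrite VT ?eqxx // in_setD rS rJ.
  move=> [VS nT].
  pose K := [set rho | x rho == 0].
  have SK : S \subset K by apply/subsetP => rho rS; rewrite inE VS.
  have stK : in_stratum u cones a lam (xJ K).
    apply: NNPP => nst; apply: nT; exists (K :\: S).
      rewrite inE; apply/existsP; exists K; rewrite SK eqxx /=.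
      by apply/negP => /pbP.
    by move=> rho; rewrite !inE => /andP[_ /eqP].
  apply: (@mono_stratum R n r u cones a lam C (xJ K) x pC) => //.
  - by move=> rho rC; apply: VS; rewrite (subsetP CS).
  - move=> rho xr; apply: Sge; apply/negP => rS; move/negP: xr; apply.
    by rewrite VS.
  - move=> rho; rewrite /xJ inE; case: (x rho == 0) => //; move/negP; case; exact/eqP.
Qed.
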